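(* Let $G$ be a graph and $x$ an arbitrary vertex of $G$. Then there exists a Grundy dominating sequence of $G$ that contains $x$.
   Context: For a graph $G$, $N[v]$ denotes the closed neighborhood of $v$. A sequence $(v_1,\ldots,v_k)$ of distinct vertices is a closed neighborhood sequence if $N[v_i]\setminus\bigcup_{j=1}^{i-1}N[v_j]\neq\emptyset$ for each $i\in[k]$. A Grundy dominating sequence is a closed neighborhood sequence of maximum possible length in $G$. *)

(* Defs.v *)
From mathcomp Require Import all_boot.
Set Implicit Arguments. Unset Strict Implicit. Unset Printing Implicit Defensive.

Definition simple_graph (T : finType) (e : rel T) : Prop :=
  symmetric e /\ irreflexive e.

Definition cnbh (T : finType) (e : rel T) (v : T) : {set T} :=
  [set u | (u == v) || e v u].

Definition cn_sequence (T : finType) (e : rel T) (s : seq T) : Prop :=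
  uniq s /\
  forall i : nat, i < size s ->
    forall x0 : T,
      cnbh e (nth x0 s i) :\: \bigcup_(v <- take i s) cnbh e v != set0.

Definition grundy_dominating_sequence (T : finType) (e : rel T) (s : seq T) : Prop :=
  cn_sequence e s /\ forall t : seq T, cn_sequence e t -> size t <= size s.

(* Main.v *)
Require Import Defs.
From mathcomp Require Import all_boot.
From mathcomp Require Import zify.
From Stdlib Require Import Classical.
Set Implicit Arguments. Unset Strict Implicit. Unset Printing Implicit Defensive.

Section S.
Variables (T : finType) (e : rel T).

Definition U (s : seq T) : {set T} := \bigcup_(v <- s) cnbh e v.

Lemma U_cat a b : U (a ++ b) = U a :|: U b.
Proof. by rewrite /U big_cat. Qed.
Lemma U_cons v b : U (v :: b) = cnbh e v :|: U b.
Proof. by rewrite /U big_cons. Qed.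
Lemma U_nil : U [::] = set0.
Proof. by rewrite /U big_nil. Qed.

Lemma cnP s : cn_sequence e s <->
  uniq s /\ forall a v b, s = a ++ v :: b -> ~~ (cnbh e v \subset U a).
Proof.
split.
- move=> [Hu H]; split=> // a v b Hs.
  have Hi : size a < size s by rewrite Hs size_cat /=; lia.
  have := H _ Hi v.
  rewrite Hs nth_cat ltnn subnn /= take_size_cat //.
  by rewrite -setD_eq0.
- move=> [Hu H]; split=> // i Hi x0.
  rewrite setD_eq0; apply: (H _ _ (drop i.+1 s)).
  by rewrite -drop_nth // cat_take_drop.
Qed.

Lemma split3 (a b a' b' : seq T) x v :
  a ++ x :: b = a' ++ v :: b' ->
  [/\ a' = a, v = x & b' = b] \/
  (exists c, a = a' ++ v :: c /\ b' = c ++ x :: b) \/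
  (exists c, a' = a ++ x :: c /\ b = c ++ v :: b').
Proof.
elim: a a' => [|y a IH] [|z a'] /= E.
- case: E => -> ->; by left.
- case: E => -> ->; right; right; by exists a'.
- case: E => -> <-; right; left; by exists a.
- case: E => -> /IH [[-> -> ->]|[[c [-> ->]]|[c [-> ->]]]].
  + by left.
  + by right; left; exists c.
  + by right; right; exists c.
Qed.

Lemma cn_size s : cn_sequence e s -> size s <= #|T|.
Proof. by case=> /card_uniqP <- _; apply: max_card. Qed.

Lemma exists_max : exists s, cn_sequence e s /\
  forall t, cn_sequence e t -> size t <= size s.
Proof.
suff : forall n s, cn_sequence e s -> #|T| - size s <= n -> exists s, cn_sequence e s /\
  forall t, cn_sequence e t -> size t <= size s.
  move=> H; apply: (H #|T| [::]); last by rewrite subn0.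
  by split => // i.
elim=> [|n IH] s Hs Hn.
- destruct (classic (exists t, cn_sequence e t /\ size s < size t)) as [[t [Ht Hlt]]|N].
  + have := cn_size Ht; lia.
  + exists s; split => // t Ht; rewrite leqNgt; apply/negP => Hlt; apply: N; by exists t.
- destruct (classic (exists t, cn_sequence e t /\ size s < size t)) as [[t [Ht Hlt]]|N].
  + apply: (IH t Ht); have := cn_size Ht; lia.
  + exists s; split => // t Ht; rewrite leqNgt; apply/negP => Hlt; apply: N; by exists t.
Qed.

Lemma find_prefix x s : cnbh e x \subset U s -> x \in cnbh e x ->
  exists a v b, s = a ++ v :: b /\ ~~ (cnbh e x \subset U a) /\
    cnbh e x \subset U a :|: cnbh e v.
Proof.
move=> + Hx; elim/last_ind: s => [|s w IH].
- rewrite U_nil => /subsetP /(_ _ Hx); by rewrite inE.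
- rewrite -cats1 U_cat U_cons U_nil setU0 => Hsub.
  case: (boolP (cnbh e x \subset U s)) => H.
  + have [a [v [b [-> [H1 H2]]]]] := IH H.
    exists a, v, (rcons b w); split=> //; by rewrite -catA /= cats1.
  + by exists s, w, [::].
Qed.

End S.

Theorem proposition4p1 (T : finType) (e : rel T) (x : T) :
  simple_graph e ->
  exists s : seq T, grundy_dominating_sequence e s /\ x \in s.
Proof.
move=> _.
have [S [HS Hmax]] := exists_max e.
case: (boolP (x \in S)) => HxS; first by exists S.
have Hx : x \in cnbh e x by rewrite inE eqxx.
have Hcov : cnbh e x \subset U e S.
  apply/negPn/negP => Hn.
  have : cn_sequence e (rcons S x).
    apply/cnP; have [Hu H] := (cnP e S).1 HS; split.
      by rewrite rcons_uniq HxS Hu.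
    move=> a v b; case/lastP: b => [|b' w].
      by rewrite cats1 => /rcons_inj [<- <-].
    rewrite -rcons_cons -rcons_cat => /rcons_inj [Hs _].
    exact: H Hs.
  move/Hmax; rewrite size_rcons; lia.
have [a [v [b [HSe [H1 H2]]]]] := find_prefix Hcov Hx.
have [Hu H] := (cnP e S).1 HS.
exists (a ++ x :: b); split; last by rewrite mem_cat inE eqxx orbT.
have Hsz : size (a ++ x :: b) = size S by rewrite HSe !size_cat.
split; last by move=> t /Hmax; rewrite Hsz.
apply/cnP; split.
  move: Hu HxS; rewrite HSe !cat_uniq /= !mem_cat !inE negb_or.
  move=> Hu HxS; rewrite negb_or; move: HxS; rewrite !negb_or => /and3P [-> _ ->]; by case/and4P: Hu => -> /andP [_ ->] _ ->.

move=> a' v' b' /split3 [[-> -> _]|[[c [Ha Hb]]|[c [Ha Hb]]]] //.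
- apply: (H a' v' (c ++ v :: b)); by rewrite HSe Ha -catA.
- apply/negP => Hsub; have := H (a ++ v :: c) v' b'.
  rewrite HSe Hb -catA /= => /(_ erefl) /negP; apply.
  apply: (subset_trans Hsub); rewrite Ha !U_cat !U_cons.
  rewrite !setUA; apply: setSU.
  by rewrite subUset subsetUl.
Qed.
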